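(* Let $G$ be an infinite separable Hausdorff topological group. Then $G$ is not dense-subgroup-pseudocompact, i.e., there exists a dense subgroup of $G$ that is not pseudocompact.
   Context: A space is pseudocompact if every continuous real-valued function on it is bounded. A topological group $G$ is dense-subgroup-pseudocompact if every dense subgroup of $G$ (with the subspace topology) is pseudocompact. *)

(* Defs.v *)
From HB Require Import structures.
From mathcomp Require Import all_boot all_order all_algebra.
From mathcomp Require Import all_classical all_reals all_analysis.
Set Implicit Arguments. Unset Strict Implicit. Unset Printing Implicit Defensive.
Import Order.TTheory GRing.Theory Num.Theory numFieldNormedType.Exports.
Local Open Scope classical_set_scope.
Local Open Scope ring_scope.

Definition is_topological_group (T : topologicalType)
  (mul : T -> T -> T) (inv : T -> T) (e : T) : Prop :=
  [/\ (forall x y z, mul x (mul y z) = mul (mul x y) z),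
      (forall x, mul e x = x /\ mul x e = x),
      (forall x, mul (inv x) x = e /\ mul x (inv x) = e),
      continuous (fun p : T * T => mul p.1 p.2) &
      continuous inv].

Definition is_subgroup (T : Type) (mul : T -> T -> T) (inv : T -> T) (e : T)
  (H : set T) : Prop :=
  [/\ H e, (forall x y, H x -> H y -> H (mul x y)) & (forall x, H x -> H (inv x))].

Definition separable_space (T : topologicalType) : Prop :=
  exists D : set T, countable D /\ dense D.

(* Continuous functions on the
   subspace A are exactly the restrictions to A of maps f : T -> R with
   {within A, continuous f}. *)
Definition pseudocompact_subspace (R : realType) (T : topologicalType) (A : set T)
  : Prop :=
  forall f : T -> R, {within A, continuous f} ->
    exists M : R, forall x, A x -> `|f x| <= M.

Definition dense_subgroup_pseudocompact (R : realType) (T : topologicalType)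
  (mul : T -> T -> T) (inv : T -> T) (e : T) : Prop :=
  forall H : set T, is_subgroup mul inv e H -> dense H ->
    pseudocompact_subspace R H.

(* Main.v *)
Require Import Defs.
From HB Require Import structures.
From mathcomp Require Import all_boot all_order all_algebra.
From mathcomp Require Import all_classical all_reals all_analysis.
Import Order.TTheory GRing.Theory Num.Theory numFieldNormedType.Exports.
Local Open Scope classical_set_scope.
Local Open Scope ring_scope.



Lemma tg_assoc {T : topologicalType} {mul inv} {e : T} :
  is_topological_group mul inv e -> forall x y z, mul x (mul y z) = mul (mul x y) z.
Proof. by case. Qed.
Lemma tg_e1 {T : topologicalType} {mul inv} {e : T} :
  is_topological_group mul inv e -> forall x, mul e x = x.
Proof. by case=> _ h _ _ _ x; case: (h x). Qed.
Lemma tg_e2 {T : topologicalType} {mul inv} {e : T} :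
  is_topological_group mul inv e -> forall x, mul x e = x.
Proof. by case=> _ h _ _ _ x; case: (h x). Qed.
Lemma tg_i1 {T : topologicalType} {mul inv} {e : T} :
  is_topological_group mul inv e -> forall x, mul (inv x) x = e.
Proof. by case=> _ _ h _ _ x; case: (h x). Qed.
Lemma tg_i2 {T : topologicalType} {mul inv} {e : T} :
  is_topological_group mul inv e -> forall x, mul x (inv x) = e.
Proof. by case=> _ _ h _ _ x; case: (h x). Qed.
Lemma tg_cancel {T : topologicalType} {mul inv} {e : T} :
  is_topological_group mul inv e -> forall a b c, mul a b = mul a c -> b = c.
Proof.
move=> G a b c h.
have := congr1 (mul (inv a)) h.
by rewrite !(tg_assoc G) (tg_i1 G) !(tg_e1 G).
Qed.
Lemma tg_inve {T : topologicalType} {mul inv} {e : T} :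
  is_topological_group mul inv e -> inv e = e.
Proof. by move=> G; rewrite -{1}(tg_e2 G (inv e)) (tg_i1 G). Qed.
Lemma tg_invM {T : topologicalType} {mul inv} {e : T} :
  is_topological_group mul inv e -> forall a b, inv (mul a b) = mul (inv b) (inv a).
Proof.
move=> G a b; apply: (tg_cancel G (mul a b)).
rewrite (tg_i2 G) !(tg_assoc G) -(tg_assoc G a) (tg_i2 G) (tg_e2 G) (tg_i2 G) //.
Qed.
Lemma tg_invK {T : topologicalType} {mul inv} {e : T} :
  is_topological_group mul inv e -> forall a, inv (inv a) = a.
Proof.
move=> G a; apply: (tg_cancel G (inv a)).
by rewrite (tg_i2 G) (tg_i1 G).
Qed.

Lemma tg_lmul_cont {T : topologicalType} {mul inv} {e : T} :
  is_topological_group mul inv e -> forall c, continuous (mul c).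
Proof.
case=> _ _ _ cm _ c x.
have h : (fun z => (c, z)) @ x --> (c, x).
  by apply: cvg_pair; [exact: cvg_cst | exact: cvg_id].
exact: (@continuous_comp _ _ _ (fun z => (c, z)) (fun p : T * T => mul p.1 p.2) x h (cm (c, x))).
Qed.

Definition gent {T : topologicalType} (mul : T -> T -> T) (inv : T -> T) (e : T)
  : set_system (T * T) :=
  [set E | exists U, nbhs e U /\ [set xy | U (mul (inv xy.1) xy.2)] `<=` E].

Lemma tg_mul_ee {T : topologicalType} {mul inv} {e : T} :
  is_topological_group mul inv e -> forall U, nbhs e U ->
  exists V, nbhs e V /\ forall a b, V a -> V b -> U (mul a b).
Proof.
move=> G U nU; have G' := G; case: G' => _ _ _ cm _.
have nU' : nbhs (mul (e, e).1 (e, e).2) U by rewrite /= (tg_e1 G).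
have := cm (e, e) _ nU'.
case=> -[A B] /= [nA nB] sub.
exists (A `&` B); split; first exact: filterI.
by move=> a b [Aa _] [_ Bb]; exact: (sub (a, b)).
Qed.

Lemma gent_filter {T : topologicalType} {mul inv} {e : T} :
  is_topological_group mul inv e -> Filter (gent mul inv e).
Proof.
move=> G; constructor.
- by exists setT; split; [exact: filterT|].
- move=> P Q [U [nU sU]] [V [nV sV]]; exists (U `&` V); split; first exact: filterI.
  by move=> xy [Ux Vx]; split; [exact: sU|exact: sV].
- by move=> P Q PQ [U [nU sU]]; exists U; split => // xy /sU /PQ.
Qed.

Lemma gent_diag {T : topologicalType} {mul inv} {e : T} :
  is_topological_group mul inv e -> forall A, gent mul inv e A -> diagonal `<=` A.
Proof.
move=> G A [U [nU sU]] [x y]; rewrite /diagonal /= => <-; apply: sU => /=.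
by rewrite (tg_i1 G); exact: nbhs_singleton.
Qed.

Lemma gent_inv {T : topologicalType} {mul inv} {e : T} :
  is_topological_group mul inv e -> forall A, gent mul inv e A ->
  gent mul inv e ([set xy | A (xy.2, xy.1)]).
Proof.
move=> G A [U [nU sU]]; have G' := G; case: G' => _ _ _ _ ci.
exists (inv @^-1` U); split.
  by apply: ci; rewrite (tg_inve G).
move=> [x y] /= h; apply: sU => /=.
by move: h; rewrite (tg_invM G) (tg_invK G).
Qed.

Lemma gent_split {T : topologicalType} {mul inv} {e : T} :
  is_topological_group mul inv e -> forall A, gent mul inv e A ->
  exists2 B, gent mul inv e B &
    [set xy | exists2 z, B (xy.1, z) & B (z, xy.2)] `<=` A.
Proof.
move=> G A [U [nU sU]]; have [V [nV sV]] := tg_mul_ee G U nU.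
exists [set xy | V (mul (inv xy.1) xy.2)]; first by exists V; split.
move=> [x z] /= [y /= Vxy Vyz]; apply: sU => /=.
have := sV _ _ Vxy Vyz.
by rewrite -(tg_assoc G) (tg_assoc G y) (tg_i2 G) (tg_e1 G).
Qed.

Lemma gent_nbhsE {T : topologicalType} {mul inv} {e : T} :
  is_topological_group mul inv e -> @nbhs T T = nbhs_ (gent mul inv e).
Proof.
move=> G; apply/funext => x; apply/funext => P; apply/propext; split.
- move=> nP.
  have nU : nbhs e (mul x @^-1` P).
    have h : mul x @ e --> mul x e.
      exact: tg_lmul_cont G x e.
     rewrite (tg_e2 G) in h; exact: h.
  exists [set xy | (mul x @^-1` P) (mul (inv xy.1) xy.2)].
    by exists (mul x @^-1` P); split.
  move=> y; rewrite /xsection /= inE /=.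
  by rewrite (tg_assoc G) (tg_i2 G) (tg_e1 G).
- case=> E [U [nU sU]] sub.
  apply: (filterS sub); apply: (filterS (P := [set y | U (mul (inv x) y)])).
    by move=> y Uy; rewrite /xsection /= inE; exact: (sU (x, y)).
  have h : mul (inv x) @ x --> mul (inv x) x.
    exact: tg_lmul_cont G (inv x) x.
   rewrite (tg_i1 G) in h; exact: h.
Qed.

Definition gcopy {T : topologicalType} {mul : T -> T -> T} {inv : T -> T} {e : T}
  (G : is_topological_group mul inv e) : Type := T.

HB.instance Definition _ {T : topologicalType} {mul : T -> T -> T} {inv : T -> T} {e : T}
  (G : is_topological_group mul inv e) := Topological.copy (gcopy G) T.

HB.instance Definition _ {T : topologicalType} {mul : T -> T -> T} {inv : T -> T} {e : T}
  (G : is_topological_group mul inv e) :=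
  @Nbhs_isUniform_mixin.Build (gcopy G) (gent mul inv e) (gent_filter G)
    (gent_diag G) (gent_inv G) (gent_split G) (gent_nbhsE G).

Lemma tg_sep (R : realType) {T : topologicalType} {mul inv} {e : T} :
  is_topological_group mul inv e -> hausdorff_space T ->
  forall a y : T, a <> y -> exists g : T -> R,
    [/\ continuous g, g y = 0 & g a = 1].
Proof.
move=> G hs a y ay.
have cl : closed ([set a] : set (gcopy G)).
  have : closed ([set a] : set T).
    by apply: accessible_closed_set1; exact: hausdorff_accessible.
  exact.
have := @uniform_completely_regular R (gcopy G) y [set a] cl.
move=> /(_ (nesym ay)) /(@uniform_separatorP _ R) [g [cg _ g0 g1]].
exists g; split.
- exact: cg.
- by apply: g0; exists y.
- by apply: g1; exists a.
Qed.
Lemma avoid_countable (R : realType) (S : set R) :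
  countable S -> exists r : R, [/\ 0 < r, r < 1 & ~ S r].
Proof.
move=> cS; apply: contrapT => nex.
have sub : `]0%R, 1%R[ `<=` S.
  move=> r; rewrite /= in_itv /= => /andP[r0 r1].
  by apply: contrapT => nSr; apply: nex; exists r.
have c := sub_countable (subset_card_le sub) cS.
have := countable_lebesgue_measure0 c.
rewrite lebesgue_measure_itv /= lte_fin ltr01 => /eqP.
rewrite -EFinD eqe subr0 oner_eq0 //.
Qed.

Lemma within_loc_const {T U : topologicalType} (H : set T) (f : T -> U) :
  (forall x, H x -> exists N, nbhs x N /\ forall z, N z -> H z -> f z = f x) ->
  {within H, continuous f}.
Proof.
move=> lc; apply/subspace_continuousP => x Hx V /= nV.
have [N [nN hN]] := lc x Hx.
rewrite /within /=; apply: filterS nN => z Nz Hz /=.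
rewrite /from_subspace (hN z Nz Hz); exact: nbhs_singleton nV.
Qed.

Definition relopen {T : topologicalType} (H K : set T) :=
  forall x, H x -> K x -> exists N, nbhs x N /\ forall z, N z -> H z -> K z.
Definition relclopen {T : topologicalType} (H K : set T) :=
  relopen H K /\ relopen H (~` K).

Fixpoint kseq {T : Type} (f : set T -> T -> set T) (h : nat -> T) (n : nat) : set T :=
  match n with 0 => setT | m.+1 => f (kseq f h m) (h m) end.

Lemma chain_unbounded (R : realType) {T : topologicalType} (H : set T)
  (h : nat -> T) (P : set T -> Prop) :
  (forall x, H x -> exists n, h n = x) ->
  P setT -> (forall K, P K -> exists x, K x /\ H x) ->
  (forall K y, relclopen H K -> P K ->
     exists K', [/\ K' `<=` K, relclopen H K', P K' & ~ K' y]) ->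
  ~ pseudocompact_subspace R H.
Proof.
move=> hsurj PT Pne stepH.
have step : forall K y, exists K', relclopen H K /\ P K ->
    [/\ K' `<=` K, relclopen H K', P K' & ~ K' y].
  move=> K y; have [[c pK]|nc] := pselect (relclopen H K /\ P K).
    by have [K' hK'] := stepH K y c pK; exists K'.
  by exists K => hc.
pose st := fun Ky : set T * T => Ky.
have [f hf] := @choice _ _ (fun (Ky : set T * T) K' => relclopen H Ky.1 /\ P Ky.1 ->
    [/\ K' `<=` Ky.1, relclopen H K', P K' & ~ K' Ky.2]) (fun Ky => step Ky.1 Ky.2).
pose g := fun K y => f (K, y).
pose K := kseq g h.
have inv : forall n, relclopen H (K n) /\ P (K n).
  have cT : relclopen H setT.
    split => x Hx Tx; first by exists setT; split => //; exact: filterT.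
    by exfalso; apply: Tx.
  elim=> [|n [c pn]]; first by split.
  by have [] := hf (K n, h n) (conj c pn).
have dec1 : forall n, K n.+1 `<=` K n.
  by move=> n; have [c pn] := inv n; have [] := hf (K n, h n) (conj c pn).
have out : forall n, ~ K n.+1 (h n).
  by move=> n; have [c pn] := inv n; have [] := hf (K n, h n) (conj c pn).
have dec : forall i j, (i <= j)%N -> K j `<=` K i.
  move=> i j /subnK <-; elim: (j - i)%N => [|k IH] //=.
  by rewrite addSn; apply: subset_trans (dec1 _) IH.
have exN : forall x, exists k, H x -> ~ K k x /\ forall j, (j < k)%N -> K j x.
  move=> x; have [Hx|nHx] := pselect (H x); last by exists 0%N.
  have [m hm] := hsurj x Hx.
  have exP : exists n, (fun n => ~~ `[< K n x >]) n.
    by exists m.+1; apply/negP => /asboolP; rewrite -hm; exact: out.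
  case: (ex_minnP exP) => k /negP nk kmin; exists k => _; split.
    by move=> Kk; apply: nk; exact/asboolP.
  move=> j jk; apply: contrapT => nKj.
  have := kmin j (introN (asboolP _) nKj).
  by rewrite leqNgt jk.
have [N hN] := choice exN.
move=> pc.
have cont : {within H, continuous (fun x => ((N x)%:R : R))}.
  apply: within_loc_const => x Hx.
  have [nKx Kx] := hN x Hx.
  case E : (N x) => [|k].
    by exfalso; apply: nKx; rewrite E.
  have Kk : K k x by apply: Kx; rewrite E.
  have nKk : ~ K k.+1 x by rewrite -E.
  case: (inv k) => -[op1 _] _.
  case: (inv k.+1) => -[_ op2] _.
  have [N1 [nN1 sN1]] := op1 x Hx Kk.
  have [N2 [nN2 sN2]] := op2 x Hx nKk.
  exists (N1 `&` N2); split; first exact: filterI.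
  move=> z [N1z N2z] Hz; congr (_%:R).
  have [nKz Kz] := hN z Hz.
  apply/eqP; rewrite eqn_leq; apply/andP; split.
    rewrite leqNgt; apply/negP => lt; apply: (sN2 z N2z Hz).
    exact: Kz.
  rewrite leqNgt; apply/negP => lt; apply: nKz.
  by apply: (dec (N z) k) => //; exact: sN1.
have [M hM] := pc _ cont.
have [n nM] : exists n : nat, M < n%:R.
  exists (Num.trunc `|M|).+1.
  exact: (le_lt_trans (ler_norm M) (truncnS_gt _)).
have [_ pn] := inv n.
have [y [Kny Hy]] := Pne _ pn.
have := hM y Hy; rewrite ger0_norm //.
have [nKy Ky] := hN y Hy.
have ny : (n < N y)%N.
  rewrite ltnNge; apply/negP => le; apply: nKy; exact: (dec _ _ le).
move=> le; have h1 : n%:R <= (N y)%:R :> R by rewrite ler_nat ltnW.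
by have := lt_le_trans nM (le_trans h1 le); rewrite ltxx.
Qed.
Lemma gt_nbhs (R : realType) {T : topologicalType} (g : T -> R) (x : T) (r : R) :
  continuous g -> r < g x -> nbhs x [set z | r < g z].
Proof.
move=> cg rx; apply: (cg x [set t | r < t]).
by apply: open_nbhs_nbhs; split => //; exact: open_gt.
Qed.

Lemma lt_nbhs (R : realType) {T : topologicalType} (g : T -> R) (x : T) (r : R) :
  continuous g -> g x < r -> nbhs x [set z | g z < r].
Proof.
move=> cg rx; apply: (cg x [set t | t < r]).
by apply: open_nbhs_nbhs; split => //; exact: open_lt.
Qed.

Definition letter {T : Type} (inv : T -> T) (d : nat -> T) (bn : bool * nat) : T :=
  if bn.1 then d bn.2 else inv (d bn.2).

Definition evalw {T : Type} (mul : T -> T -> T) (inv : T -> T) (e : T) (d : nat -> T)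
  (w : seq (bool * nat)) : T :=
  foldr (fun bn acc => mul (letter inv d bn) acc) e w.

Definition invw (w : seq (bool * nat)) : seq (bool * nat) :=
  rev (map (fun bn => (~~ bn.1, bn.2)) w).

Lemma evalw_cat {T : topologicalType} {mul inv} {e : T} (G : is_topological_group mul inv e)
  d w1 w2 : evalw mul inv e d (w1 ++ w2) = mul (evalw mul inv e d w1) (evalw mul inv e d w2).
Proof.
elim: w1 => [|a w IH] /=; first by rewrite (tg_e1 G).
by rewrite IH (tg_assoc G).
Qed.

Lemma evalw_inv {T : topologicalType} {mul inv} {e : T} (G : is_topological_group mul inv e)
  d w : evalw mul inv e d (invw w) = inv (evalw mul inv e d w).
Proof.
elim: w => [|a w IH] /=; first by rewrite (tg_inve G).
rewrite /invw /= rev_cons -cats1 evalw_cat // -/(invw w) IH /= (tg_e2 G).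
rewrite (tg_invM G); congr (mul _ _).
by rewrite /letter /=; case: a.1 => //=; rewrite (tg_invK G).
Qed.

Lemma discrete_case (R : realType) {T : topologicalType} (H : set T) (h : nat -> T) :
  (forall x, H x -> exists n, h n = x) -> infinite_set H ->
  (forall x, H x -> exists N, nbhs x N /\ forall z, N z -> H z -> z = x) ->
  ~ pseudocompact_subspace R H.
Proof.
move=> hs inf iso.
have rc : forall K : set T, relclopen H K.
  have ro : forall K : set T, relopen H K.
    move=> K x Hx Kx; have [N [nN sN]] := iso x Hx.
    by exists N; split => // z Nz Hz; rewrite (sN z Nz Hz).
  by move=> K; split; apply: ro.
apply: (@chain_unbounded R T H h (fun K => infinite_set (K `&` H))) => //.
- by rewrite setTI.
- move=> K iK; apply: contrapT => ne; apply: iK.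
  apply: (@sub_finite_set _ _ set0); last exact: finite_set0.
  by move=> x [Kx Hx]; apply: ne; exists x.
- move=> K y _ iK; exists (K `\` [set y]); split.
  + by move=> x [].
  + exact: rc.
  + move=> fin; apply: (infinite_setD iK (finite_set1 y)).
    apply: sub_finite_set fin => x [[Kx Hx] nx]; split => //.
  + by move=> [_]; apply.
Qed.

Lemma nondiscrete_case (R : realType) {T : topologicalType} {mul inv} {e : T}
  (G : is_topological_group mul inv e) (hsd : hausdorff_space T)
  (H : set T) (h : nat -> T) :
  (forall x, H x -> exists n, h n = x) -> (forall n, H (h n)) ->
  (forall x, H x -> forall N, nbhs x N -> exists z, [/\ N z, H z & z <> x]) ->
  ~ pseudocompact_subspace R H.
Proof.
move=> hs hH nd.
have cH : countable H.
  apply: (sub_countable (B := h @` setT)); last first.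
    exact: (sub_countable (card_image_le h setT)).
  apply: subset_card_le => x Hx; have [n hn] := hs x Hx; by exists n.
apply: (@chain_unbounded R T H h (fun K => exists x, K x /\ H x)) => //.
- by exists (h 0%N).
- move=> K y [ro rco] [x0 [Kx0 Hx0]].
  have [a [Ka Ha ay]] : exists a, [/\ K a, H a & a <> y].
    have [xy|xy] := pselect (x0 = y); last by exists x0.
    have [N [nN sN]] := ro x0 Hx0 Kx0.
    have [z [Nz Hz zx]] := nd x0 Hx0 N nN.
    by exists z; split => //; [exact: sN | rewrite -xy].
  have [g [cg gy ga]] := tg_sep R G hsd a y ay.
  have cg' : countable (g @` H) := sub_countable (card_image_le g H) cH.
  have [r [r0 r1 nr]] := @avoid_countable R _ cg'.
  exists [set w | K w /\ r < g w]; split.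
  + by move=> w [].
  + split.
    * move=> x Hx [Kx rx]; have [N [nN sN]] := ro x Hx Kx.
      exists (N `&` [set z | r < g z]); split; first by apply: filterI => //; exact: gt_nbhs cg rx.
      by move=> z [Nz rz] Hz; split => //; exact: sN.
    * move=> x Hx nK'; have [Kx|nKx] := pselect (K x).
        have gxr : g x < r.
          rewrite lt_neqAle; apply/andP; split.
            by apply/eqP => gr; apply: nr; exists x.
          by rewrite leNgt; apply/negP => rx; apply: nK'.
        exists [set z | g z < r]; split; first exact: lt_nbhs cg gxr.
        by move=> z zr Hz [_ rz]; have := lt_trans zr rz; rewrite ltxx.
      have [N [nN sN]] := rco x Hx nKx.
      by exists N; split => // z Nz Hz [Kz _]; exact: (sN z Nz Hz).
  + by exists a; split => //; split => //; rewrite ga.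
  + by move=> [_]; rewrite gy ltNge (ltW r0).
Qed.

Theorem mainTheorem6 (R : realType) (T : topologicalType)
  (mul : T -> T -> T) (inv : T -> T) (e : T) :
  is_topological_group mul inv e ->
  hausdorff_space T ->
  separable_space T ->
  infinite_set [set: T] ->
  ~ dense_subgroup_pseudocompact R mul inv e /\
  (exists H : set T, [/\ is_subgroup mul inv e H, dense H &
                         ~ pseudocompact_subspace R H]).
Proof.
move=> G hsd [D [cD dD]] infT.
have [x0 _] : exists x : T, True.
  apply: contrapT => nx; apply: infT.
  apply: (@sub_finite_set _ _ set0); last exact: finite_set0.
  by move=> x _; apply: nx; exists x.
have [f finj] := countable_injP _ cD.
pose d : nat -> T := 'pinv_(fun=> x0) D f.
have Dd : forall x, D x -> d (f x) = x.
  by move=> x Dx; rewrite /d pinvKV // inE.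
pose wd : nat -> seq (bool * nat) := fun n => odflt [::] (unpickle n).
pose h : nat -> T := fun n => evalw mul inv e d (wd n).
have hw : forall w, h (pickle w) = evalw mul inv e d w.
  by move=> w; rewrite /h /wd pickleK.
pose H := range h.
have hs : forall x, H x -> exists n, h n = x by move=> x [n _ <-]; exists n.
have hH : forall n, H (h n) by move=> n; exists n.
have sg : is_subgroup mul inv e H.
  split.
  - by exists (pickle ([::] : seq (bool * nat))) => //; rewrite hw.
  - move=> _ _ [n _ <-] [m _ <-].
    exists (pickle (wd n ++ wd m)) => //.
    by rewrite hw (evalw_cat G).
  - move=> _ [n _ <-]; exists (pickle (invw (wd n))) => //.
    by rewrite hw (evalw_inv G).
have DH : D `<=` H.
  move=> x Dx; exists (pickle [:: (true, f x)]) => //.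
  by rewrite hw /= /letter /= (tg_e2 G) Dd.
have dH : dense H.
  move=> O O0 oO; have [x [Ox Dx]] := dD O O0 oO.
  by exists x; split => //; exact: DH.
have infH : infinite_set H.
  move=> finH.
  have clH : closed H.
    by apply: (proj1 accessible_finite_set_closed (hausdorff_accessible hsd)).
  apply: infT; apply: sub_finite_set finH => x _.
  apply: contrapT => nHx.
  have [z [nHz Hz]] := dH (~` H) (ex_intro _ x nHx) (closed_openC clH).
  by apply: nHz.
have npc : ~ pseudocompact_subspace R H.
  have [[x [Hx [N [nN sN]]]]|niso] :=
    pselect (exists x, H x /\ exists N, nbhs x N /\ forall z, N z -> H z -> z = x).
    apply: (@discrete_case R T H h hs infH) => x' Hx'.
    pose c := mul x (inv x').
    exists (mul c @^-1` N); split.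
      have hc : mul c @ x' --> mul c x' by exact: tg_lmul_cont G c x'.
      apply: hc; rewrite /c -(tg_assoc G) (tg_i1 G) (tg_e2 G); exact: nN.
    move=> z Nz Hz; apply: (tg_cancel G c).
    have [Hinv Hmul] : (forall u, H u -> H (inv u)) /\
        (forall u v, H u -> H v -> H (mul u v)) by case: sg.
    have Hc : H c by apply: Hmul => //; exact: Hinv.
    rewrite (sN _ Nz (Hmul _ _ Hc Hz)).
    by rewrite /c -(tg_assoc G) (tg_i1 G) (tg_e2 G).
  apply: (@nondiscrete_case R T mul inv e G hsd H h hs hH) => x Hx N nN.
  apply: contrapT => nz; apply: niso; exists x; split => //; exists N; split => //.
  by move=> z Nz Hz; apply: contrapT => zx; apply: nz; exists z.
by split; [move=> dsp; apply: npc; exact: dsp | exists H].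
Qed.
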